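(* Let $A$ be a principal ideal domain and let $a=(a_b)_{b\neq0}\in A^\omega$. Let $d$ be a nonzero element of $A$ such that $a_d\equiv0\bmod d$. Then there is $q\in A^\omega$ with $a=d\,q$.
   Context: For a principal ideal domain $A$, $A^\omega$ is the ring whose elements are represented by families $(a_d)_{d\in A\setminus\{0\}}$ of elements of $A$ such that $d\mid e\Rightarrow a_d\equiv a_e\bmod d$ for all nonzero $d,e$; two families $(a_d)$, $(b_d)$ represent the same element iff $a_d\equiv b_d\bmod d$ for all $d\ne0$; operations are componentwise. $A$ is embedded in $A^\omega$ via constant families. *)

(* Defs.v *)
From HB Require Import structures.
From mathcomp Require Import all_boot all_algebra.
Set Implicit Arguments. Unset Strict Implicit. Unset Printing Implicit Defensive.
Import GRing.Theory.
Local Open Scope ring_scope.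

Definition dvdr (R : comNzRingType) (d e : R) : Prop := exists c : R, e = c * d.

Definition congr_mod (R : comNzRingType) (d x y : R) : Prop := dvdr d (x - y).

Definition is_ideal (R : comNzRingType) (I : R -> Prop) : Prop :=
  [/\ I 0, (forall x y, I x -> I y -> I (x + y)) & (forall r x, I x -> I (r * x))].

Definition is_PID (R : idomainType) : Prop :=
  forall I : R -> Prop, is_ideal I ->
    exists g : R, forall x, I x <-> exists r : R, x = r * g.

(* Representatives of elements of A^omega: families (a_d)_{d <> 0}, encoded as
   functions R -> R (the value at 0 is irrelevant), with the coherence
   condition d | e -> a_d = a_e mod d for nonzero d, e. *)
Definition omega_family (R : idomainType) (a : R -> R) : Prop :=
  forall d e : R, d != 0 -> e != 0 -> dvdr d e -> congr_mod d (a d) (a e).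

Definition omega_eq (R : idomainType) (a b : R -> R) : Prop :=
  forall d : R, d != 0 -> congr_mod d (a d) (b d).

Definition omega_const (R : idomainType) (c : R) : R -> R := fun _ => c.
Definition omega_mul (R : idomainType) (a b : R -> R) : R -> R := fun d => a d * b d.

(* Main.v *)
Require Import Defs.
From mathcomp Require Import all_boot all_algebra.
From mathcomp Require Import ring.
From Stdlib Require Import ClassicalEpsilon.
Import GRing.Theory.
Local Open Scope ring_scope.

Theorem mainTheorem9 (R : idomainType) (hPID : is_PID R)
  (a : R -> R) (ha : omega_family a) (d : R) (hd : d != 0)
  (had : congr_mod d (a d) 0) :
  exists q : R -> R, omega_family q /\ omega_eq a (omega_mul (omega_const d) q).
Proof.
have H : forall e : R, exists c : R, e != 0 -> a (d * e) = c * d.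
  move=> e; case: (eqVneq e 0) => [->|he]; first by exists 0.
  have hde : d * e != 0 by rewrite mulf_neq0.
  have [k hk] := ha d (d * e) hd hde (ex_intro _ e (mulrC d e)).
  case: had => m hm; rewrite subr0 in hm.
  exists (m - k) => _.
  have -> : a (d * e) = a d - (a d - a (d * e)) by ring.
  rewrite hk hm; ring.
pose q := fun e => proj1_sig (constructive_indefinite_description _ (H e)).
have hq : forall e, e != 0 -> a (d * e) = q e * d.
  by move=> e he; rewrite /q; case: constructive_indefinite_description => c /= ->.
exists q; split.
- move=> e f he hf [t ht].
  have hde : d * e != 0 by rewrite mulf_neq0.
  have hdf : d * f != 0 by rewrite mulf_neq0.
  have hdv : dvdr (d * e) (d * f) by exists t; rewrite ht; ring.
  have [k hk] := ha _ _ hde hdf hdv.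
  rewrite (hq _ he) (hq _ hf) in hk.
  exists k; apply: (mulIf hd).
  rewrite mulrBl hk; ring.
- move=> e he.
  have hde : d * e != 0 by rewrite mulf_neq0.
  have [k hk] := ha e (d * e) he hde (ex_intro _ d erefl).
  exists k; rewrite /omega_mul /omega_const -hk (hq _ he); ring.
Qed.
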